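(* Fix a token $\texttt{<x>}\in\mathsf{Voc}$, an integer $\ell\ge0$, a length $T\ge1$ with $M\ge T$, and $\varepsilon\in(0,1)$. There exist matrices $\mathbf{K},\mathbf{Q}\in\mathbb{R}^{d\times d}$ such that for every sequence $(\mathbf{h}_1,\dots,\mathbf{h}_T)$ with $\mathbf{h}_i=[\tilde{\mathbf{h}}_i^\top,1,0]^\top$ satisfying (i) $\tilde{\mathbf{h}}_i=\sum_{v\in\mathsf{Voc}}\lambda_{i,v}\tilde{\mathbf{u}}_v$ with $\lambda_{i,v}\ge0$ and $\sum_v\lambda_{i,v}^2=1$ for all $i$, (ii) $\langle\tilde{\mathbf{u}}_{\texttt{<x>}},\tilde{\mathbf{h}}_i\rangle\in\{0,1\}$ for all $i$, and (iii) $\langle\tilde{\mathbf{u}}_{\texttt{<x>}},\tilde{\mathbf{h}}_i\rangle=0$ for $i\le\ell$, it holds for every $i\in[T]$: if $\langle\tilde{\mathbf{h}}_i,\tilde{\mathbf{u}}_{\texttt{<x>}}\rangle=1$ then $s_{i,i-\ell}>1-\varepsilon$, and otherwise $s_{i,1}>1-\varepsilon$, where $s_{i,\cdot}=\mathsf{SoftMax}(\langle\mathbf{q}_i,\mathbf{k}_1\rangle,\dots,\langle\mathbf{q}_i,\mathbf{k}_i\rangle)$ with the rotary queries and keys $\mathbf{q}_j=\mathbf{R}^{(j)}\mathbf{Q}\mathbf{h}_j$, $\mathbf{k}_j=\mathbf{R}^{(j)}\mathbf{K}\mathbf{h}_j$.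
   Context: Vocabulary $\mathsf{Voc}=\{1,\dots,V\}$. Dimension $d=d_\mathsf{TE}+2$ with $d$ and $d_\mathsf{TE}$ even; vectors $\tilde{\mathbf{u}}_v\in\mathbb{R}^{d_\mathsf{TE}}$, $v\in\mathsf{Voc}$, are orthonormal, and token embeddings are $\mathbf{u}_v=[\tilde{\mathbf{u}}_v^\top,0,0]^\top$. Rotary position embedding: $M>0$ is a fixed large integer, $\omega=M^{-2/d}$; for integer $i$ and $k\in\{1,\dots,d/2\}$, $\mathbf{R}^{(i,k)}=\begin{bmatrix}\cos(i\omega^k)&-\sin(i\omega^k)\\ \sin(i\omega^k)&\cos(i\omega^k)\end{bmatrix}$ and $\mathbf{R}^{(i)}=\mathrm{diag}(\mathbf{R}^{(i,1)},\dots,\mathbf{R}^{(i,d/2)})\in\mathbb{R}^{d\times d}$. $\mathsf{SoftMax}(\boldsymbol{x})_j=e^{x_j}/\sum_k e^{x_k}$. *)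

(* Defs.v *)
From HB Require Import structures.
From mathcomp Require Import all_boot all_order all_algebra.
From mathcomp Require Import all_classical all_reals all_analysis.
Set Implicit Arguments. Unset Strict Implicit. Unset Printing Implicit Defensive.
Import Order.TTheory GRing.Theory Num.Theory.
Local Open Scope ring_scope.

Definition dotv {R : realType} {n : nat} (u v : 'cV[R]_n) : R :=
  \sum_(k < n) u k 0 * v k 0.

Definition rope_omega {R : realType} (M d : nat) : R :=
  powR (M%:R) (- (2%:R / d%:R)).

(* Rotary matrix R^(i) in R^{d x d}: block diagonal, the p-th 2x2 block
   (0-based p, rows/cols 2p,2p+1) is the rotation by angle i * omega^(p+1),
   i.e. the block k = p+1 of the paper. *)
Definition rope {R : realType} (M d : nat) (i : nat) : 'M[R]_d :=
  \matrix_(a < d, b < d)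
    if (a./2 == b./2)%N then
      let th := i%:R * (rope_omega M d) ^+ (a./2).+1 in
      if odd a == odd b then cos th
      else if odd a then sin th else - sin th
    else 0.

Definition embed_h {R : realType} {dTE : nat} (ht : 'cV[R]_dTE) : 'cV[R]_(dTE + 2) :=
  col_mx ht (\col_(k < 2) (if k == ord0 then 1 else 0)).

Definition softmax_at {R : realType} (i : nat) (a : nat -> R) (j : nat) : R :=
  expR (a j) / \sum_(1 <= j' < i.+1) expR (a j').

Definition attn {R : realType} (M dTE : nat) (K Q : 'M[R]_(dTE + 2))
  (ht : nat -> 'cV[R]_dTE) (i j : nat) : R :=
  let q := fun t => rope M (dTE + 2) t *m (Q *m embed_h (ht t)) in
  let k := fun t => rope M (dTE + 2) t *m (K *m embed_h (ht t)) in
  softmax_at i (fun t => dotv (q i) (k t)) j.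
Arguments attn {R} M dTE K Q ht i j.

(* Main.v *)
Require Import Defs.
From HB Require Import structures.
From mathcomp Require Import all_boot all_order all_algebra.
From mathcomp Require Import all_classical all_reals all_analysis.
From mathcomp Require Import ring lra zify.
Import Order.TTheory GRing.Theory Num.Theory.
Local Open Scope ring_scope.

Lemma cos_dec (R : realType) (a b : R) : 0 <= a -> a <= b -> b <= pi / 2 -> cos b <= cos a.
Proof.
move=> a0 ab bp.
have p2 := pi_ge2 R.
have -> : b = a + (b - a) by ring.
rewrite cosD.
have ca : 0 <= cos a by apply: cos_ge0_pihalf; apply/andP; split; lra.
have sa : 0 <= sin a by apply: sin_ge0_pi; apply/andP; split; lra.
have sh : 0 <= sin (b - a) by apply: sin_ge0_pi; apply/andP; split; lra.
have ch := cos_le1 (b - a).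
nra.
Qed.

Lemma sin_inc (R : realType) (a b : R) : 0 <= a -> a <= b -> b <= pi / 2 -> sin a <= sin b.
Proof.
move=> a0 ab bp.
have p2 := pi_ge2 R.
have e : forall x : R, sin x = cos (pi / 2 - x).
  by move=> x; rewrite cosB cos_pihalf sin_pihalf; ring.
rewrite !e; apply: cos_dec; lra.
Qed.

Lemma softmax_big (R : realType) (i js : nat) (a : nat -> R) (g e : R) :
  (1 <= js <= i)%N -> 0 < g -> e < 1 ->
  (forall j, (1 <= j <= i)%N -> j != js -> a j <= a js - g) ->
  i%:R * expR (- g) < e -> 1 - e < softmax_at i a js.
Proof.
move=> hjs g0 e1 hgap hz.
rewrite /softmax_at.
set E := expR (a js).
set S := \sum_(1 <= j' < i.+1) expR (a j').
have E0 : 0 < E by apply: expR_gt0.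
have z0 : 0 <= i%:R * expR (- g) by apply: mulr_ge0; [exact: ler0n| exact: ltW (expR_gt0 _)].
have hS : S <= E + i%:R * expR (- g) * E.
  rewrite /S (bigD1_seq js) /=; last exact: iota_uniq.
    2: by rewrite mem_index_iota; lia.
  rewrite -/E; apply: lerD => //.
  apply: (@le_trans _ _ (\sum_(1 <= j' < i.+1) (expR (- g) * E))).
    rewrite [X in _ <= X](bigID (fun j => j != js)) /=.
    apply: (@le_trans _ _ (\sum_(1 <= j' < i.+1 | j' != js) (expR (- g) * E))).
      rewrite big_seq_cond [X in _ <= X]big_seq_cond.
      apply: ler_sum => j /andP [] /[!mem_index_iota] hj hne.
      rewrite /E -expRD ler_expR.
      have := hgap j ltac:(lia) hne; lra.
    rewrite lerDl; apply: sumr_ge0 => j _; apply: mulr_ge0; exact: ltW (expR_gt0 _).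
  rewrite sumr_const_nat subSS subn0 -mulr_natr.
  by rewrite le_eqVlt; apply/orP; left; apply/eqP; ring.
have S0 : 0 < S.
  rewrite /S (bigD1_seq js) /=; last exact: iota_uniq.
    2: by rewrite mem_index_iota; lia.
  apply: (lt_le_trans E0); rewrite -/E lerDl; apply: sumr_ge0 => j _; exact: ltW (expR_gt0 _).
rewrite ltr_pdivlMr //.
nra.
Qed.

Lemma mx0E (R : pzRingType) m nn (i : 'I_m) (jj : 'I_nn) : (0 : 'M[R]_(m,nn)) i jj = 0.
Proof. by rewrite mxE. Qed.

Definition rot2 (R : realType) (a : R) (z : 'cV[R]_2) : 'cV[R]_2 :=
  \col_k (if k == ord0 then cos a * z ord0 0 - sin a * z ord_max 0
          else sin a * z ord0 0 + cos a * z ord_max 0).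

Arguments rot2 {R}.

Definition thet (R : realType) (M n : nat) : R := rope_omega M (n + 2) ^+ (n./2).+1.

Lemma rope_emb (R : realType) (M n t : nat) (z : 'cV[R]_2) : ~~ odd n ->
  rope M (n + 2) t *m col_mx (0 : 'cV[R]_n) z = col_mx 0 (rot2 (t%:R * thet R M n) z).
Proof.
move=> hn.
have hh : forall k : nat, (k < 2)%N -> (n + k)./2 = n./2.
  move=> k hk; rewrite -!divn2; lia.
have ho : forall k : nat, odd (n + k) = odd k.
  by move=> k; rewrite oddD (negbTE hn).
apply/matrixP => k j.
case: (splitP k) => k' hk.
  have -> : k = lshift 2 k' by apply/val_inj.
  clear hk; move: k'; clear k => k /=.
  rewrite col_mxEu mx0E mxE big_split_ord /= big1 => [|b _]; last by rewrite col_mxEu mx0E mulr0.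
  rewrite big1 ?addr0 // => b _.
  rewrite mxE /=.
  have -> : (k./2 == (n + b)./2) = false.
    apply/negbTE; rewrite hh //; rewrite -!divn2; have := ltn_ord k; lia.
  by rewrite mul0r.
have -> : k = rshift n k' by apply/val_inj.
clear hk; move: k'; clear k => k /=.
rewrite col_mxEd mxE big_split_ord /= big1 => [|b _]; last by rewrite col_mxEu mx0E mulr0.
rewrite add0r !big_ord_recl big_ord0 addr0 !col_mxEd !mxE /=.
have -> : ord_max = lift ord0 (ord0 : 'I_1) by apply/val_inj.
rewrite /thet hh // hh //.
case: k => [[|[|//]] hk] /=.
  all: rewrite (ord1 j) /bump /= !ho hh // eqxx /=; ring.
Qed.

Lemma dot_emb (R : realType) (n : nat) (a b : 'cV[R]_2) :
  dotv (col_mx (0 : 'cV[R]_n) a) (col_mx (0 : 'cV[R]_n) b) =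
  a ord0 0 * b ord0 0 + a ord_max 0 * b ord_max 0.
Proof.
rewrite /dotv big_split_ord /= big1 => [|k _]; last by rewrite !col_mxEu !mx0E mulr0.
rewrite add0r !big_ord_recl big_ord0 addr0 !col_mxEd.
have -> : (ord_max : 'I_2) = lift ord0 (ord0 : 'I_1) by apply/val_inj.
by [].
Qed.

Lemma thet_eq (R : realType) (M n : nat) : (0 < M)%N -> ~~ odd n -> thet R M n = M%:R^-1.
Proof.
move=> M0 hn.
rewrite /thet /rope_omega -powR_mulrn; last exact: powR_ge0.
rewrite -powRrM.
have -> : - (2%:R / (n + 2)%:R) * (n./2).+1%:R = - 1 :> R.
  have e : (n + 2)%:R = 2 * (n./2).+1%:R :> R.
    rewrite -natrM; congr (_%:R).
    have := odd_double_half n; rewrite (negbTE hn) add0n -muln2; lia.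
  rewrite e; field.
  apply/negP => /eqP; have := ler0n R (n./2); lra.
by rewrite powRN powRr1 // ler0n.
Qed.

Definition wv (R : realType) (L : R) : 'cV[R]_2 :=
  \col_k (if k == ord0 then cos L - cos 1 else sin 1 - sin L).
Arguments wv {R}.
Definition Bm (R : realType) : 'M[R]_2 :=
  \matrix_(a, b) (if b == ord0 then (if a == ord0 then cos 1 else - sin 1) else 0).
Definition Qm (R : realType) (n : nat) (ux : 'cV[R]_n) (L : R) : 'M[R]_(n + 2) :=
  block_mx 0 0 (wv L *m ux^T) (Bm R).
Arguments Qm {R n}.
Definition Km (R : realType) (n : nat) (c : R) : 'M[R]_(n + 2) :=
  block_mx 0 0 0 (\matrix_(a, b) (if (a == ord0) && (b == ord0) then c else 0)).

Lemma Q_embed (R : realType) (n : nat) (ux h : 'cV[R]_n) (L : R) :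
  Qm ux L *m embed_h h = col_mx 0 (\col_k (if k == ord0 then (cos L - cos 1) * dotv ux h + cos 1
                                          else (sin 1 - sin L) * dotv ux h - sin 1)).
Proof.
rewrite /Qm /embed_h mul_block_col !mul0mx addr0; congr col_mx.
rewrite -mulmxA.
apply/matrixP => k j; rewrite !mxE (ord1 j).
rewrite big_ord1 !mxE !big_ord_recl big_ord0 !mxE /=.
rewrite /dotv.

have -> : \sum_(j0 < n) ux^T 0 j0 * h j0 0 = \sum_(j0 < n) ux j0 0 * h j0 0.
  by apply: eq_bigr => i _; rewrite mxE.
case: ifP => _ /=; ring.
Qed.

Lemma K_embed (R : realType) (n : nat) (h : 'cV[R]_n) (c : R) :
  Km R n c *m embed_h h = col_mx 0 (\col_k (if k == ord0 then c else 0)).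
Proof.
rewrite /Km /embed_h mul_block_col !mul0mx !add0r; congr col_mx.
apply/matrixP => k j; rewrite !mxE (ord1 j).
rewrite !big_ord_recl big_ord0 !mxE /=.
by rewrite eqxx andbT mulr1 mulr0 !addr0.
Qed.

Lemma score (R : realType) (M n i t : nat) (ux h h' : 'cV[R]_n) (L c : R) : ~~ odd n ->
  dotv (rope M (n + 2) i *m (Qm ux L *m embed_h h)) (rope M (n + 2) t *m (Km R n c *m embed_h h')) =
  c * (((cos L - cos 1) * dotv ux h + cos 1) * cos (t%:R * thet R M n - i%:R * thet R M n)
     + ((sin 1 - sin L) * dotv ux h - sin 1) * sin (t%:R * thet R M n - i%:R * thet R M n)).
Proof.
move=> hn.
rewrite Q_embed K_embed !rope_emb // dot_emb !mxE /= cosB sinB; ring.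
Qed.

Lemma xgap (R : realType) (th : R) (M m : nat) : 0 < th -> M%:R * th = 1 ->
  (0 < m <= M)%N -> cos (m%:R * th) <= 1 - sin th ^+ 2 / 2.
Proof.
move=> t0 Mt hm.
have p2 := pi_ge2 R.
have h1 : 1 <= m%:R :> R by rewrite ler1n; lia.
have h2 : m%:R <= M%:R :> R by rewrite ler_nat; lia.
have : cos (m%:R * th) <= cos th.
  apply: cos_dec; nra.
have := cos2sin2 th.
have := cos_le1 th.
nra.
Qed.

Lemma dgap (R : realType) (th : R) (M a b : nat) : 0 < th -> M%:R * th = 1 ->
  (a < b)%N -> (b < M)%N -> cos (1 - a%:R * th) <= cos (1 - b%:R * th) - sin th ^+ 2 / 2.
Proof.
move=> t0 Mt hab hbM.
have p2 := pi_ge2 R.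
have h1 : a%:R + 1 <= b%:R :> R by rewrite natr1 ler_nat; lia.
have h2 : b%:R + 1 <= M%:R :> R by rewrite natr1 ler_nat; lia.
have a0 : 0 <= a%:R :> R by exact: ler0n.
set X := 1 - b%:R * th.
have hX : th <= X by rewrite /X; nra.
have hX1 : X <= 1 by rewrite /X; nra.
have c1 : cos (1 - a%:R * th) <= cos (X + th) by apply: cos_dec; rewrite /X; nra.
have cX : 0 <= cos X by apply: cos_ge0_pihalf; apply/andP; split; lra.
have sX : sin th <= sin X by apply: sin_inc; lra.
have st : 0 <= sin th by apply: sin_ge0_pi; apply/andP; split; lra.
have ct := cos_le1 th.
have := cosD X th.
nra.
Qed.

Theorem lemma6 (R : realType) (V dTE M : nat) (u : 'I_V -> 'cV[R]_dTE)
  (x : 'I_V) (l T : nat) (eps : R) :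
  ~~ odd dTE ->
  (forall v w : 'I_V, dotv (u v) (u w) = (v == w)%:R) ->
  (0 < M)%N -> (1 <= T)%N -> (T <= M)%N ->
  0 < eps < 1 ->
  exists K Q : 'M[R]_(dTE + 2),
    forall ht : nat -> 'cV[R]_dTE,
      (forall i : nat, (1 <= i <= T)%N ->
         exists lam : 'I_V -> R,
           (forall v, 0 <= lam v) /\ \sum_v lam v ^+ 2 = 1 /\
           ht i = \sum_v lam v *: u v) ->
      (forall i : nat, (1 <= i <= T)%N ->
         dotv (u x) (ht i) = 0 \/ dotv (u x) (ht i) = 1) ->
      (forall i : nat, (1 <= i <= T)%N -> (i <= l)%N -> dotv (u x) (ht i) = 0) ->
      forall i : nat, (1 <= i <= T)%N ->
        if dotv (ht i) (u x) == 1
        then attn M dTE K Q ht i (i - l)%N > 1 - eps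
        else attn M dTE K Q ht i 1%N > 1 - eps.
Proof.
move=> hn _ M0 T1 TM /andP [e0 e1].
have p2 := pi_ge2 R.
set th := thet R M dTE.
have thE : th = M%:R^-1 by rewrite /th thet_eq.
have Mpos : 0 < M%:R :> R by rewrite ltr0n.
have t0 : 0 < th by rewrite thE invr_gt0.
have Mt : M%:R * th = 1 by rewrite thE mulfV // gt_eqF.
have t1 : th <= 1.
  have : 1 <= M%:R :> R by rewrite ler1n.
  nra.
set dl := sin th ^+ 2 / 2.
have st : 0 < sin th by apply: sin2_gt0; apply/andP; split; lra.
have dl0 : 0 < dl by rewrite /dl; apply: divr_gt0 => //; apply: exprn_gt0.
set c := T%:R / (eps * dl).
have c0 : 0 < c by rewrite /c; apply: divr_gt0; [rewrite ltr0n | apply: mulr_gt0].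
have cdl : c * dl * eps = T%:R.
  rewrite /c; field; apply/andP; split; apply: lt0r_neq0 => //.
have hz : forall i : nat, (i <= T)%N -> i%:R * expR (- (c * dl)) < eps.
  move=> i hi.
  have hiT : i%:R <= T%:R :> R by rewrite ler_nat.
  have E0 := expR_gt0 (- (c * dl)).
  have E1 : expR (- (c * dl)) * expR (c * dl) = 1 by rewrite -expRD addNr expR0.
  have E2 := expR_ge1Dx (c * dl).
  have i0 : 0 <= i%:R :> R by exact: ler0n.
  have : expR (- (c * dl)) * (1 + c * dl) <= 1 by rewrite -[X in _ <= X]E1; apply: ler_wpM2l; [exact: ltW | exact: E2].
  nra.
exists (Km R dTE c), (Qm (u x) (l%:R * th)).
move=> ht _ H01 Hpre i Hi.
have dsym : dotv (ht i) (u x) = dotv (u x) (ht i).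
  by rewrite /dotv; apply: eq_bigr => k _; rewrite mulrC.
rewrite dsym /attn.
have hsc := fun t => @score R M dTE i t (u x) (ht i) (ht t) (l%:R * th) c hn.
rewrite -/th in hsc.
have hiT : (i <= T)%N by case/andP: Hi.
case: (H01 i Hi) => hs; rewrite hs.
- rewrite (_ : (0 : R) == 1 = false); last by apply/negbTE; rewrite eq_sym oner_neq0.
  apply: (@softmax_big R i 1 _ (c * dl) eps) => //.
  + by case/andP: Hi => ->.
  + by apply: mulr_gt0.
  + move=> j hj hj1.
    rewrite !hsc hs !mulr0 !add0r.
    have e : forall t : nat, (t <= i)%N -> cos 1 * cos (t%:R * th - i%:R * th) + - sin 1 * sin (t%:R * th - i%:R * th)
        = cos (1 - (i - t)%N%:R * th).
      move=> t ht'; rewrite natrB // (_ : 1 - (i%:R - t%:R) * th = (t%:R * th - i%:R * th) + 1); last ring.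
      rewrite (cosD (t%:R * th - i%:R * th) 1); ring.
    rewrite e; last by case/andP: hj.
    have e1' := e 1%N ltac:(case/andP: Hi => //); rewrite mulr1n in e1'; rewrite e1'.
    have := @dgap R th M (i - j)%N (i - 1)%N t0 Mt ltac:(lia) ltac:(lia).
    rewrite -/dl => hh; rewrite -mulrBr ler_pM2l //.
  + exact: hz.
- rewrite eqxx.
  have hil : (l < i)%N.
    rewrite ltnNge; apply/negP => hle.
    by have := Hpre i Hi hle; rewrite hs => /eqP; rewrite oner_eq0.
  apply: (@softmax_big R i (i - l)%N _ (c * dl) eps) => //.
  + lia.
  + by apply: mulr_gt0.
  + move=> j hj hjne; have hjne' : j <> (i - l)%N by apply/eqP.
    rewrite !hsc hs !mulr1.
    have e : forall t : nat, (cos (l%:R * th) - cos 1 + cos 1) * cos (t%:R * th - i%:R * th) +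
        (sin 1 - sin (l%:R * th) - sin 1) * sin (t%:R * th - i%:R * th)
        = cos ((t%:R + l%:R - i%:R) * th).
      move=> t; rewrite -[X in _ = cos X](_ : (t%:R * th - i%:R * th) + l%:R * th = _); last by ring.
      rewrite (cosD (t%:R * th - i%:R * th)); ring.
    rewrite !e.
    have -> : ((i - l)%N%:R + l%:R - i%:R) * th = 0 by rewrite natrB ?(ltnW hil) //; ring.
    rewrite cos0 mulr1.
    have : cos ((j%:R + l%:R - i%:R) * th) <= 1 - dl.
      case: (leqP i (j + l)) => hjl.
        have -> : (j%:R + l%:R - i%:R) * th = (j + l - i)%N%:R * th by rewrite natrB // natrD.
        apply: (@xgap R th M) => //; lia.
      have -> : (j%:R + l%:R - i%:R) * th = - ((i - (j + l))%N%:R * th) by rewrite natrB ?natrD; [ring | lia].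
      rewrite cosN; apply: (@xgap R th M) => //; lia.
    nra.
  + exact: hz.
Qed.
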